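(* Let $S\subseteq\Sigma^*$ be a task and, for $i\in\{1,2\}$, let $h_i:\Sigma^*\to\mathbb{R}^{|\Sigma|}$ be language models with $\|h_1-h_2\|<\Delta$ on $S$ for some $\Delta>0$. For $i\in\{1,2\}$ let $K_i=(\mathbb{V}_i,U,\mathbb{F}_i,\succ)$ be a circuit of $h_i$ on $S$, let $R_i$ be an $(L_i,\delta_i)$-representation of $K_i$ obtained through an alignment map $\rho_i$, and let $A_i$ be an $\eta_i$-faithful interpretation of $K_i$. Let $\Pi$ and $\Pi_\star$ be alignment classes mapping (subsets of) $K_1$'s variables $\mathbb{V}_1$ onto the variables of $A_1$ and $A_2$ respectively, so that $\Pi^{-1}(A_1)$ and $\Pi_\star^{-1}(A_2)$ are sets of implementations over $(\mathbb{V}_1,U)$. Assume: (i) there is a map $\Phi$ (a distillation map) such that the implementation distance is $d(F,\tilde F)=\|\Phi\mathbb{V}_1^{F}-\Phi\mathbb{V}_1^{\tilde F}\|$ for implementations $F,\tilde F$ over $\mathbb{V}_1$; (ii) there are $\omega>0$ and a $1$-Lipschitz map $\Psi$ such that for all such implementations $F,\tilde F$ (including $\mathbb{F}_1$), writing $R_F$ for the representation of $(\mathbb{V}_1,U,F,\cdot)$ under $\rho_1$ and $H^F$ for the concatenation of all its hidden variable solutions, $\|\Psi H^F-\Psi H^{\tilde F}\|\le d_{\mathrm{repr}}(R_F,R_{\tilde F})$ and $\|\Phi\mathbb{V}_1^{F}-\Psi H^F\|<\omega$; (iii) there exists $F^\star\in\Pi_\star^{-1}(A_2)$ whose representation $R_{F^\star}$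 under $\rho_1$ is an $(L_1,\delta_1)$-representation. Then $$d_{\mathrm{interp}}(A_1,A_2)\le \kappa(A_1,K_1,\Pi)+\kappa(A_2,K_1,\Pi_\star)+2\omega+d_{\mathrm{repr}}(R_1,R_2)+\delta_1+\delta_2+\Delta,$$ where $d_{\mathrm{interp}}(A_1,A_2)=d_H(\Pi^{-1}(A_1),\Pi_\star^{-1}(A_2))$.
   Context: $\Sigma$ is an alphabet, $\Sigma^*$ the set of finite strings over it; a language model is a map $h:\Sigma^*\to\mathbb{R}^{|\Sigma|}$ and a task is a subset $S\subseteq\Sigma^*$. A deterministic causal model is a quadruple $(\mathbb{V},U,\mathbb{F},\succ)$ with hidden variables $\mathbb{V}=(v_1,\dots,v_m)$, an input variable $U$, functions $\mathbb{F}=(f_1,\dots,f_m)$ and a partial order $\succ$ on $\mathbb{V}$, where $v_k:=f_k(\mathrm{Pa}(v_k),U)$ with $\mathrm{Pa}(v_k)\subseteq\{v\in\mathbb{V}:v\succ v_k\}$. For an input value $u$, $\mathbb{V}^{\mathbb{F}}(u)$ is the unique solution (values of all variables consistent with $u$ and $\mathbb{F}$) and $v_k^{\mathbb{F}}$ is regarded as a function of the input. An intervention $\mathrm{do}(v_k\leftarrow\tilde f)$ replaces the equation of $v_k$ by $v_k:=\tilde f(\widetilde{\mathrm{Pa}}(v_k),U)$ with $\widetilde{\mathrm{Pa}}(v_k)\subseteq\{v:v\succ v_k\}$; $\mathcal{I}(v_k)$ is the set of such interventions and $\mathcal{I}(\mathbb{V})$ the set of interventions on variables of $\mathbb{V}$.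 A causal model $K_2=(\tilde{\mathbb{V}},\tilde U,\tilde{\mathbb{F}},\succ_2)$ abstracts $K_1=(\mathbb{V},U,\mathbb{F},\succ_1)$ if there are surjective maps $\pi:\mathrm{SubsetsOf}(\mathbb{V})\to\tilde{\mathbb{V}}$ and $\omega:\mathcal{I}(\mathbb{V})\to\mathcal{I}(\tilde{\mathbb{V}})$ with $\tilde v_k=\pi\big(\bigcup_{v_k\in\pi^{-1}(\tilde v_k)}f_k(\mathrm{Pa}(v_k),U)\big)$ for all $\tilde v_k\in\tilde{\mathbb{V}}$, and $\pi(\mathrm{do}(v_k\leftarrow f))=\mathrm{do}(\pi(v_k)\leftarrow\omega(f))$ for all $v_k\in\mathbb{V}$, $\mathrm{do}(v_k\leftarrow f)\in\mathcal{I}(v_k)$; such $\pi$ is an alignment. An $m$-circuit of $h$ on $S$ is a causal model with $m$ hidden variables whose input $U$ is $S$-valued, whose hidden variables are real-vector-valued ($v_k\in\mathbb{R}^{n_k}$), and which has a terminal output variable $v_{\mathrm{out}}$ (no variable below it) with $v_{\mathrm{out}}^{\mathbb{F}}(s)=h(s)$ for all $s\in S$. A causal model $A=(\mathbb{V}^\star,U,\mathbb{F}^\star,\succ)$ abstracting a circuit $K$ is an $\eta$-faithful interpretation of $K$ if it has an output variable $v^\star_{\mathrm{out}}$ with $\|v^{\star,\mathbb{F}^\star}_{\mathrm{out}}-v^{\mathbb{F}}_{\mathrm{out}}\|<\eta$ on $S$. Given a circuit with variables $(\mathbb{V},U)$, an interpretation $A$ and a class $\Pi$ of alignments from $\mathrm{SubsetsOf}(\mathbb{V})$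 to $A$'s variables, $F$ is an implementation of $A$ if for some $\pi\in\Pi$, $A$ is an $\eta$-faithful interpretation of $(\mathbb{V},U,F,\succ_F)$ under $\pi$; $\Pi^{-1}(A)$ denotes the set of implementations. With a (pseudo)metric $d$ on implementations, the interpretive compression is $\kappa(A,K,\Pi)=\sup_{F,F'\in\Pi^{-1}(A)}d(F,F')$, and $d_H$ is the Hausdorff distance induced by $d$. An $(L,\delta)$-representation of a circuit $K$ of $h$ on $S$ is an $L$-circuit of $h$ abstracting $K$ (through an alignment $\rho$) whose hidden variables form a chain: $\mathrm{Pa}(v_1)=\{U\}$, $\mathrm{Pa}(v_{k+1})=\{v_k\}$, $v_L=v_{\mathrm{out}}$, and for each $k$ there are linear maps $A_k:\mathbb{R}^{n_k}\to\mathbb{R}^{|\Sigma|}$, $B_k:\mathbb{R}^{|\Sigma|}\to\mathbb{R}^{n_k}$ with operator norms $\le1$ and $\|A_kv_k^{\mathbb{F}}-h\|<\delta$, $\|B_kh-v_k^{\mathbb{F}}\|<\delta$ (norms of functions on $S$). For representations $R_1,R_2$ with $H_i$ the concatenation (direct sum) of all hidden-variable solutions of $R_i$, $d_{\mathrm{repr}}(R_1,R_2)=\max\big(\inf_{\|A\|_{\mathrm{op}}\le1}\|AH_1-H_2\|,\ \inf_{\|B\|_{\mathrm{op}}\le1}\|H_1-BH_2\|\big)$ over linear operators $A,B$, with $\|\cdot\|$ a direct-sum norm. *)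

(* Defs.v *)
From mathcomp Require Import all_boot all_order all_algebra.
From mathcomp Require Import all_classical all_reals ereal.

Unset Implicit Arguments.
Unset Strict Implicit.
Unset Printing Implicit Defensive.

Import Order.TTheory GRing.Theory Num.Theory.
Local Open Scope classical_set_scope.
Local Open Scope ring_scope.

(* Finite-dimensional real vectors.  R^I is modelled as I -> R for a   *)
(* finite index type I; R^n is 'I_n -> R.  The vector norm is the     *)
(* max-norm; on a concatenation (direct sum) of blocks the max-norm   *)
(* coincides with the max of the block norms (an l^oo direct-sum      *)
(* norm).                                                             *)

Definition vec (R : realType) (n : nat) := 'I_n -> R.

Definition vnorm {R : realType} {I : finType} (x : I -> R) : R :=
  \big[Num.max/0]_(i : I) `|x i|.

Definition vcast {R : realType} {m : nat} (n : nat) (v : vec R m) : vec R n :=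
  fun i => match @insub nat (fun k => k < m)%N _ (nat_of_ord i) with
           | Some j => v j
           | None => 0
           end.

Definition linmap (R : realType) (I J : finType) := J -> I -> R.

Definition lapp {R : realType} {I J : finType} (a : linmap R I J) (x : I -> R)
  : J -> R := fun j => \sum_(i : I) a j i * x i.

Definition opnorm_le1 {R : realType} {I J : finType} (a : linmap R I J) :=
  forall x : I -> R, vnorm (lapp a x) <= vnorm x.

Definition tcast {A B : Type} (e : A = B) (x : A) : B :=
  match e in _ = T return T with erefl => x end.

Section Models.
Context {R : realType} {Sigma : finType}.

Definition LM := seq Sigma -> vec R #|Sigma|.

Variable S : set (seq Sigma).

(* Norm of a (vector-valued) function on S: sup_{s in S} of the vector
   norm (extended-real valued; the sup over the empty task is 0). *)
Definition fnorm {I : finType} (f : seq Sigma -> I -> R) : \bar R :=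
  ereal_sup ([set 0%E] `|` [set (vnorm (f s))%:E | s in S]).

(* Deterministic causal models (V, U, F, >-) with hidden variables     *)
(* v_0..v_{m-1} of arbitrary value types, input U ranging over        *)
(* strings.  [cm_prec j k] means  v_j >- v_k  (v_j is above v_k).      *)
Record cmodel := CM {
  cm_m : nat;
  cm_T : 'I_cm_m -> Type;
  cm_prec : rel 'I_cm_m;
  cm_f : forall k : 'I_cm_m, (forall j, cm_T j) -> seq Sigma -> cm_T k }.

Definition is_sol (K : cmodel) (u : seq Sigma) (V : forall j, cm_T K j) :=
  forall k, V k = cm_f K k V u.

(* well-formedness: >- is a strict partial order, Pa(v_k) is contained in
   {v : v >- v_k}, and for every input of the task there is a unique
   solution V^F(u). *)
Definition cm_wf (K : cmodel) :=
  [/\ irreflexive (cm_prec K), transitive (cm_prec K),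
      (forall k V V' u, (forall j, cm_prec K j k -> V j = V' j) ->
          cm_f K k V u = cm_f K k V' u)
    & forall u, S u -> exists! V, is_sol K u V].

Definition solo (K : cmodel) (u : seq Sigma) : option (forall j, cm_T K j) :=
  match pselect (exists V, is_sol K u V) with
  | left H => Some (proj1_sig (cid H))
  | right _ => None
  end.

Definition alignment (K A : cmodel) := {set 'I_(cm_m K)} -> 'I_(cm_m A).

(* Abstraction: pi is surjective and [cons K A pi] holds, where [cons] is
   the (interventional-consistency) part of the paper's definition of
   abstraction, kept as a parameter. *)
Definition abstracts
  (cons : forall K A : cmodel, alignment K A -> Prop)
  (K A : cmodel) (pi : alignment K A) :=
  (forall y, exists x, pi x = y) /\ cons K A pi.

Record circ (m : nat) (n : 'I_m -> nat) := Circ {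
  c_prec : rel 'I_m;
  c_f : forall k : 'I_m, (forall j, vec R (n j)) -> seq Sigma -> vec R (n k) }.
Arguments c_prec {m n}.
Arguments c_f {m n}.

Definition to_cm {m n} (F : circ m n) : cmodel :=
  @CM m (fun k => vec R (n k)) (c_prec F) (c_f F).

Definition csol {m n} (F : circ m n) : seq Sigma -> forall j, vec R (n j) :=
  fun u => match solo (to_cm F) u with
           | Some V => V
           | None => fun j _ => 0
           end.

Definition is_circ_of {m n} (h : LM) (F : circ m n) (o : 'I_m) :=
  [/\ cm_wf (to_cm F), (forall j, ~~ c_prec F o j), n o = #|Sigma|
    & forall s, S s -> vcast #|Sigma| (csol F s o) = h s].

Definition aout {A : cmodel} {o : 'I_(cm_m A)} (e : cm_T A o = vec R #|Sigma|)
  : seq Sigma -> vec R #|Sigma| :=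
  fun s => match solo A s with
           | Some V => tcast e (V o)
           | None => fun _ => 0
           end.

Variable cons : forall K A : cmodel, alignment K A -> Prop.

Definition faithful_interp {m n} (A : cmodel) (F : circ m n) (o : 'I_m)
  (pi : alignment (to_cm F) A) (eta : R) :=
  [/\ cm_wf A, (exists h, is_circ_of h F o), abstracts cons (to_cm F) A pi
    & exists oA (e : cm_T A oA = vec R #|Sigma|),
        (fnorm (fun s i => (aout e s i - vcast #|Sigma| (csol F s o) i)%R)
           < eta%:E)%E].

Definition impls {m} n (o : 'I_m) (A : cmodel)
  (Pi : set ({set 'I_m} -> 'I_(cm_m A))) (eta : R) : set (circ m n) :=
  [set F | exists pi, Pi pi /\ faithful_interp A F o pi eta].

(* Chain structure: Pa(v_0) = {U}, Pa(v_{k+1}) = {v_k}. *)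
Definition chain {L} {nR : 'I_L -> nat} (Rp : circ L nR) :=
  forall (k : 'I_L) V V' u u',
    (forall j : 'I_L, (nat_of_ord j).+1 = nat_of_ord k -> V j = V' j) ->
    (nat_of_ord k = 0%N -> u = u') ->
    c_f Rp k V u = c_f Rp k V' u'.

Definition is_repr {m n} (h : LM) (K : circ m n) (o : 'I_m)
  {L} {nR : 'I_L -> nat} (Rp : circ L nR) (rho : {set 'I_m} -> 'I_L)
  (delta : R) :=
  [/\ is_circ_of h K o,
      exists oR : 'I_L, nat_of_ord oR = L.-1 /\ is_circ_of h Rp oR,
      chain Rp,
      abstracts cons (to_cm K) (to_cm Rp) rho
    & forall k : 'I_L, exists (a : linmap R 'I_(nR k) 'I_#|Sigma|)
                              (b : linmap R 'I_#|Sigma| 'I_(nR k)),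
        [/\ opnorm_le1 a, opnorm_le1 b,
            (fnorm (fun s i => (lapp a (csol Rp s k) i - h s i)%R) < delta%:E)%E
          & (fnorm (fun s i => (lapp b (h s) i - csol Rp s k i)%R) < delta%:E)%E]].

Definition ordF {L} (nR : 'I_L -> nat) : 'I_L -> finType := fun k => 'I_(nR k).
Definition hidx {L} (nR : 'I_L -> nat) : finType := {k : 'I_L & ordF nR k}.

Definition Hcat {L} {nR : 'I_L -> nat} (Rp : circ L nR)
  : seq Sigma -> hidx nR -> R :=
  fun s p => csol Rp s (tag p) (tagged p).

Definition drepr {L1} {n1 : 'I_L1 -> nat} (R1 : circ L1 n1)
  {L2} {n2 : 'I_L2 -> nat} (R2 : circ L2 n2) : \bar R :=
  maxe
    (ereal_inf [set fnorm (fun s i => lapp a (Hcat R1 s) i - Hcat R2 s i)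
               | a in [set a : linmap R (hidx n1) (hidx n2) | opnorm_le1 a]])
    (ereal_inf [set fnorm (fun s i => Hcat R1 s i - lapp b (Hcat R2 s) i)
               | b in [set b : linmap R (hidx n2) (hidx n1) | opnorm_le1 b]]).

Definition kappa {T : Type} (d : T -> T -> R) (P : set T) : \bar R :=
  ereal_sup [set (d F F')%:E | F in P & F' in P].

Definition dHaus {T : Type} (d : T -> T -> R) (P Q : set T) : \bar R :=
  maxe (ereal_sup [set ereal_inf [set (d F F')%:E | F' in Q] | F in P])
       (ereal_sup [set ereal_inf [set (d F F')%:E | F in P] | F' in Q]).

End Models.

(* Main.v *)
Require Import Defs.
From mathcomp Require Import all_boot all_order all_algebra.
From mathcomp Require Import all_classical all_reals ereal normedtype lra.

Import Order.TTheory GRing.Theory Num.Theory.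
Import numFieldNormedType.Exports.
Local Open Scope classical_set_scope.
Local Open Scope ring_scope.

Section H.
Context {R : realType}.

Lemma vnorm_ge0 {I : finType} (x : I -> R) : 0 <= vnorm x.
Proof.
rewrite /vnorm; apply: (big_ind (fun y => 0 <= y)) => //.
by move=> a b ha hb; rewrite le_max ha.
Qed.

Lemma vnorm_ub {I : finType} (x : I -> R) i : `|x i| <= vnorm x.
Proof.
rewrite /vnorm (bigD1 i) //= le_max lexx //.
Qed.

Lemma vnorm_le {I : finType} (x : I -> R) c :
  0 <= c -> (forall i, `|x i| <= c) -> vnorm x <= c.
Proof.
move=> c0 h; rewrite /vnorm; apply: (big_ind (fun y => y <= c)) => //.
by move=> a b ha hb; rewrite ge_max ha hb.
Qed.

Definition lcomp {I J K : finType} (a : linmap R J K) (b : linmap R I J)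
  : linmap R I K := fun k i => \sum_j a k j * b j i.

Lemma lapp_comp {I J K : finType} (a : linmap R J K) (b : linmap R I J) x :
  lapp (lcomp a b) x = lapp a (lapp b x).
Proof.
apply: boolp.funext => k; rewrite /lapp /lcomp.
under eq_bigr do rewrite mulr_suml.
rewrite exchange_big /=; apply: eq_bigr => j _.
by rewrite mulr_sumr; apply: eq_bigr => i _; rewrite mulrA.
Qed.

Lemma opnorm_comp {I J K : finType} (a : linmap R J K) (b : linmap R I J) :
  opnorm_le1 a -> opnorm_le1 b -> opnorm_le1 (lcomp a b).
Proof. by move=> ha hb x; rewrite lapp_comp; apply: le_trans (ha _) (hb _). Qed.

Lemma lappB {I J : finType} (a : linmap R I J) x y j :
  lapp a (fun i => x i - y i) j = lapp a x j - lapp a y j.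
Proof.
by rewrite /lapp -sumrB; apply: eq_bigr => i _; rewrite mulrBr.
Qed.

Lemma lapp_lip {I J : finType} (a : linmap R I J) x y j :
  opnorm_le1 a -> `|lapp a x j - lapp a y j| <= vnorm (fun i => x i - y i).
Proof.
move=> ha; rewrite -lappB; apply: le_trans (ha _); exact: vnorm_ub.
Qed.

Definition hproj {L} (n : 'I_L -> nat) (j : 'I_L) : linmap R (hidx n) 'I_(n j) :=
  fun i p => (p == Tagged (ordF n) (i : ordF n j))%:R.

Lemma lapp_proj {L} (n : 'I_L -> nat) j x i :
  lapp (hproj n j) x i = x (Tagged (ordF n) (i : ordF n j)).
Proof.
rewrite /lapp /hproj (bigD1 (Tagged (ordF n) (i : ordF n j))) //= eqxx mul1r.
by rewrite big1 ?addr0 // => p /negbTE ->; rewrite mul0r.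
Qed.

Lemma opnorm_proj {L} (n : 'I_L -> nat) j : opnorm_le1 (hproj n j).
Proof.
move=> x; apply: vnorm_le; first exact: vnorm_ge0.
by move=> i; rewrite lapp_proj; apply: vnorm_ub.
Qed.

Definition stack {I : finType} {L} (n : 'I_L -> nat)
  (b : forall k : 'I_L, linmap R I 'I_(n k)) : linmap R I (hidx n) :=
  fun p i => b (tag p) (tagged p) i.

Lemma lapp_stack {I : finType} {L} (n : 'I_L -> nat) b x p :
  lapp (@stack I L n b) x p = lapp (b (tag p)) x (tagged p).
Proof. by []. Qed.

Lemma opnorm_stack {I : finType} {L} (n : 'I_L -> nat) b :
  (forall k, opnorm_le1 (b k)) -> opnorm_le1 (@stack I L n b).
Proof.
move=> hb x; apply: vnorm_le; first exact: vnorm_ge0.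
move=> p; rewrite lapp_stack; apply: le_trans (hb (tag p) x).
exact: vnorm_ub.
Qed.

End H.

Lemma lapp_projE {R : realType} {L} (n : 'I_L -> nat) j (x : hidx n -> R) :
  lapp (hproj n j) x = fun i => x (Tagged (ordF n) (i : ordF n j)).
Proof. by apply: boolp.funext => i; rewrite lapp_proj. Qed.
Arguments lapp_lip {R I J a} x y j.

Section H2.
Context {R : realType} {Sigma : finType} (S : set (seq Sigma)).

Lemma fnorm_ge0 {I : finType} (f : seq Sigma -> I -> R) : (0 <= fnorm S f)%E.
Proof. by apply: ereal_sup_ubound; left. Qed.

Lemma fnorm_ub {I : finType} (f : seq Sigma -> I -> R) s :
  S s -> ((vnorm (f s))%:E <= fnorm S f)%E.
Proof. by move=> Ss; apply: ereal_sup_ubound; right; exists s. Qed.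

Lemma fnorm_lt {I : finType} (f : seq Sigma -> I -> R) s c :
  S s -> (fnorm S f < c%:E)%E -> vnorm (f s) < c.
Proof. by move=> Ss h; have := le_lt_trans (fnorm_ub f s Ss) h; by rewrite lte_fin. Qed.

Lemma fnorm_lt_ge0 {I : finType} (f : seq Sigma -> I -> R) c :
  (fnorm S f < c%:E)%E -> 0 <= c.
Proof. by move=> h; have := ltW (le_lt_trans (fnorm_ge0 f) h); by rewrite lee_fin. Qed.

Lemma fnorm_shift {I J : finType} (f : seq Sigma -> I -> R) (g : seq Sigma -> J -> R) c :
  0 <= c -> (forall s, S s -> vnorm (f s) <= vnorm (g s) + c) ->
  (fnorm S f <= fnorm S g + c%:E)%E.
Proof.
move=> c0 h; apply: ge_ereal_sup => _ [->|[s Ss <-]].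
  by apply: adde_ge0; [exact: fnorm_ge0|rewrite lee_fin].
apply: (@le_trans _ _ ((vnorm (g s) + c)%:E)); first by rewrite lee_fin h.
by rewrite EFinD; apply: leeD2r; apply: fnorm_ub.
Qed.

Lemma inf_shift (X Y : set (\bar R)) (c : R) :
  (forall y, Y y -> exists2 x, X x & (x <= y + c%:E)%E) ->
  (ereal_inf X <= ereal_inf Y + c%:E)%E.
Proof.
move=> h; rewrite -leeBlDr //; apply: le_ereal_inf_tmp => y Yy.
have [x Xx hx] := h y Yy.
rewrite leeBlDr //; apply: le_trans hx; exact: ereal_inf_lbound.
Qed.

End H2.
Arguments fnorm_lt {R Sigma S I f s c}.
Arguments fnorm_lt_ge0 {R Sigma S I f c}.

Lemma maxe_shift {R : realType} (x1 x2 y1 y2 c : \bar R) :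
  (x1 <= y1 + c)%E -> (x2 <= y2 + c)%E -> (maxe x1 x2 <= maxe y1 y2 + c)%E.
Proof.
move=> h1 h2; rewrite ge_max; apply/andP; split.
  by apply: le_trans h1 _; apply: leeD2r; rewrite le_max lexx.
by apply: le_trans h2 _; apply: leeD2r; rewrite le_max lexx orbT.
Qed.

Lemma drepr_ge0 {R : realType} {Sigma : finType} (S : set (seq Sigma))
  {L1} {n1 : 'I_L1 -> nat} (R1 : @circ R Sigma L1 n1)
  {L2} {n2 : 'I_L2 -> nat} (R2 : @circ R Sigma L2 n2) : (0 <= drepr S R1 R2)%E.
Proof.
rewrite /drepr le_max; apply/orP; left.
by apply: le_ereal_inf_tmp => _ [a _ <-]; apply: fnorm_ge0.
Qed.

Section H3.
Context {R : realType} {Sigma : finType} (S : set (seq Sigma)).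

Lemma drepr_bound (h1 h2 : @LM R Sigma) L1 (nR1 : 'I_L1 -> nat)
  (R1 RFs : circ L1 nR1) L2 (nR2 : 'I_L2 -> nat) (R2 : circ L2 nR2)
  (d1 d2 D : R)
  (j0 : 'I_L2) (a2 : linmap R 'I_(nR2 j0) 'I_#|Sigma|) (ha2 : opnorm_le1 a2)
  (fa2 : (fnorm S (fun s i => (lapp a2 (csol R2 s j0) i - h2 s i)%R) < d2%:E)%E)
  (b2 : forall j, linmap R 'I_#|Sigma| 'I_(nR2 j)) (hb2 : forall j, opnorm_le1 (b2 j))
  (fb2 : forall j, (fnorm S (fun s i => (lapp (b2 j) (h2 s) i - csol R2 s j i)%R) < d2%:E)%E)
  (k0 : 'I_L1) (aF : linmap R 'I_(nR1 k0) 'I_#|Sigma|) (haF : opnorm_le1 aF)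
  (faF : (fnorm S (fun s i => (lapp aF (csol RFs s k0) i - h1 s i)%R) < d1%:E)%E)
  (bF : forall k, linmap R 'I_#|Sigma| 'I_(nR1 k)) (hbF : forall k, opnorm_le1 (bF k))
  (fbF : forall k, (fnorm S (fun s i => (lapp (bF k) (h1 s) i - csol RFs s k i)%R) < d1%:E)%E)
  (fD : (fnorm S (fun s i => (h1 s i - h2 s i)%R) < D%:E)%E) :
  (drepr S R1 RFs <= drepr S R1 R2 + (d2 + D + d1)%:E)%E.
Proof.
have d2ge0 := fnorm_lt_ge0 fa2.
have d1ge0 := fnorm_lt_ge0 faF.
have Dge0 := fnorm_lt_ge0 fD.
have c0 : 0 <= d2 + D + d1 by lra.
rewrite /drepr; apply: maxe_shift.
- apply: inf_shift => _ [A hA <-].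
  exists (fnorm S (fun s i => lapp (lcomp (stack nR1 bF) (lcomp a2 (lcomp (hproj nR2 j0) A))) (Hcat R1 s) i - Hcat RFs s i)).
    exists (lcomp (stack nR1 bF) (lcomp a2 (lcomp (hproj nR2 j0) A))) => //.
    rewrite /=; apply: opnorm_comp; first exact: opnorm_stack.
    apply: opnorm_comp => //; apply: opnorm_comp => //; exact: opnorm_proj.
  apply: (fnorm_shift S) => // s Ss.
  set V := (X in _ <= X + _).
  have V0 : 0 <= V by exact: vnorm_ge0.
  apply: vnorm_le; first lra.
  move=> p; rewrite !lapp_comp lapp_stack.
  set y := lapp a2 _.
  have h1b : `|lapp (bF (tag p)) (h1 s) (tagged p) - Hcat RFs s p| <=
     vnorm (fun i => lapp (bF (tag p)) (h1 s) i - csol RFs s (tag p) i) := vnorm_ub _ _.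
  have h1c := fnorm_lt Ss (fbF (tag p)).
  have hy : vnorm (fun t => y t - h1 s t) <= V + (d2 + D).
    apply: vnorm_le; first lra.
    move=> t.
    have e1 : `|y t - lapp a2 (csol R2 s j0) t| <= V.
      apply: le_trans (lapp_lip _ _ _ ha2) _.
      apply: vnorm_le => // i; rewrite lapp_proj.
      exact: (vnorm_ub (fun q => lapp A (Hcat R1 s) q - Hcat R2 s q) (Tagged (ordF nR2) (i : ordF nR2 j0))).
    have e2 : `|lapp a2 (csol R2 s j0) t - h2 s t| <= vnorm (fun i => lapp a2 (csol R2 s j0) i - h2 s i) := vnorm_ub _ t.
    have e2c := fnorm_lt Ss fa2.
    have e3 : `|h1 s t - h2 s t| <= vnorm (fun i => h1 s i - h2 s i) := vnorm_ub _ t.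
    have e3c := fnorm_lt Ss fD.
    have tri : `|y t - h1 s t| <= `|y t - lapp a2 (csol R2 s j0) t| + `|lapp a2 (csol R2 s j0) t - h2 s t| + `|h1 s t - h2 s t|.
      rewrite (distrC (h1 s t)).
      apply: le_trans (ler_distD (h2 s t) _ _) _; rewrite lerD2r.
      exact: ler_distD.
    lra.
  have e4 := lapp_lip y (h1 s) (tagged p) (hbF (tag p)).
  have tri := ler_distD (lapp (bF (tag p)) (h1 s) (tagged p)) (lapp (bF (tag p)) y (tagged p)) (Hcat RFs s p).
  lra.
- apply: inf_shift => _ [B hB <-].
  exists (fnorm S (fun s i => Hcat R1 s i - lapp (lcomp B (lcomp (stack nR2 b2) (lcomp aF (hproj nR1 k0)))) (Hcat RFs s) i)).
    exists (lcomp B (lcomp (stack nR2 b2) (lcomp aF (hproj nR1 k0)))) => //.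
    rewrite /=; apply: opnorm_comp => //; apply: opnorm_comp; first exact: opnorm_stack.
    apply: opnorm_comp => //; exact: opnorm_proj.
  apply: (fnorm_shift S) => // s Ss.
  set V := (X in _ <= X + _).
  have V0 : 0 <= V by exact: vnorm_ge0.
  apply: vnorm_le; first lra.
  move=> p; rewrite !lapp_comp lapp_projE.
  set z := lapp (stack nR2 b2) _.
  have hz : vnorm (fun q => Hcat R2 s q - z q) <= d2 + D + d1.
    apply: vnorm_le => // q.
    rewrite /z lapp_stack.
    set w := lapp aF _.
    have f1 : `|lapp (b2 (tag q)) (h2 s) (tagged q) - Hcat R2 s q| <=
       vnorm (fun i => lapp (b2 (tag q)) (h2 s) i - csol R2 s (tag q) i) := vnorm_ub _ _.
    have f1c := fnorm_lt Ss (fb2 (tag q)).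
    have f2 := lapp_lip (h2 s) w (tagged q) (hb2 (tag q)).
    have hw : vnorm (fun t => h2 s t - w t) <= D + d1.
      apply: vnorm_le; first lra.
      move=> t.
      have g1 : `|w t - h1 s t| <= vnorm (fun i => lapp aF (csol RFs s k0) i - h1 s i) := vnorm_ub _ t.
      have g1c := fnorm_lt Ss faF.
      have g2 : `|h1 s t - h2 s t| <= vnorm (fun i => h1 s i - h2 s i) := vnorm_ub _ t.
      have g2c := fnorm_lt Ss fD.
      have tri := ler_distD (h1 s t) (h2 s t) (w t).
      rewrite distrC in g1; rewrite distrC in g2.
      lra.
    have tri := ler_distD (lapp (b2 (tag q)) (h2 s) (tagged q)) (Hcat R2 s q) (lapp (b2 (tag q)) w (tagged q)).
    rewrite distrC in f1.
    lra.
  have e := lapp_lip (Hcat R2 s) z p hB.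
  have tri := ler_distD (lapp B (Hcat R2 s) p) (Hcat R1 s p) (lapp B z p).
  have e0 : `|Hcat R1 s p - lapp B (Hcat R2 s) p| <= V := vnorm_ub _ p.
  lra.
Qed.

End H3.

Theorem theorem1
  (R : realType) (Sigma : finType) (S : set (seq Sigma))
  (cons : forall K A : @cmodel Sigma, alignment K A -> Prop)
  (* the two language models, Delta-close on S *)
  (h1 h2 : @LM R Sigma) (Delta : R) (hDelta : 0 < Delta)
  (hclose : (fnorm S (fun s i => (h1 s i - h2 s i)%R) < Delta%:E)%E)
  (* circuits K_i of h_i *)
  (m1 : nat) (n1 : 'I_m1 -> nat) (K1 : circ m1 n1) (o1 : 'I_m1)
  (m2 : nat) (n2 : 'I_m2 -> nat) (K2 : circ m2 n2) (o2 : 'I_m2)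
  (hK1 : is_circ_of S h1 K1 o1) (hK2 : is_circ_of S h2 K2 o2)
  (* (L_i, delta_i)-representations R_i of K_i through rho_i *)
  (L1 : nat) (nR1 : 'I_L1 -> nat) (R1 : circ L1 nR1)
  (rho1 : {set 'I_m1} -> 'I_L1) (delta1 : R)
  (hR1 : is_repr S cons h1 K1 o1 R1 rho1 delta1)
  (L2 : nat) (nR2 : 'I_L2 -> nat) (R2 : circ L2 nR2)
  (rho2 : {set 'I_m2} -> 'I_L2) (delta2 : R)
  (hR2 : is_repr S cons h2 K2 o2 R2 rho2 delta2)
  (* eta_i-faithful interpretations A_i of K_i; alignment classes *)
  (A1 A2 : @cmodel Sigma) (eta1 eta2 : R)
  (Pi : set ({set 'I_m1} -> 'I_(cm_m A1)))
  (Pis : set ({set 'I_m1} -> 'I_(cm_m A2)))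
  (pi1 : alignment (to_cm K1) A1) (hpi1 : Pi pi1)
  (hA1 : faithful_interp S cons A1 K1 o1 pi1 eta1)
  (pi2 : alignment (to_cm K2) A2)
  (hA2 : faithful_interp S cons A2 K2 o2 pi2 eta2)
  (* (i) distillation map Phi; (ii) Psi, omega; R_F under rho1 *)
  (E : normedModType R)
  (Phi : (seq Sigma -> forall j : 'I_m1, vec R (n1 j)) -> E)
  (Psi : (seq Sigma -> hidx nR1 -> R) -> E)
  (omega : R) (homega : 0 < omega)
  (RF : circ m1 n1 -> circ L1 nR1) (hRF1 : RF K1 = R1) :
  let P1 := impls S cons n1 o1 A1 Pi eta1 in
  let P2 := impls S cons n1 o1 A2 Pis eta2 in
  let d := fun F F' : circ m1 n1 => `|Phi (csol F) - Phi (csol F')| in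
  (forall F, (P1 `|` P2) F ->
     chain (RF F) /\ abstracts cons (to_cm F) (to_cm (RF F)) rho1) ->
  (forall f g : seq Sigma -> hidx nR1 -> R,
     (`|Psi f - Psi g|%:E <= fnorm S (fun s i => (f s i - g s i)%R))%E) ->
  (forall F F', (P1 `|` P2) F -> (P1 `|` P2) F' ->
     (`|Psi (Hcat (RF F)) - Psi (Hcat (RF F'))|%:E
        <= drepr S (RF F) (RF F'))%E) ->
  (forall F, (P1 `|` P2) F -> `|Phi (csol F) - Psi (Hcat (RF F))| < omega) ->
  (* (iii) *)
  (exists Fs, P2 Fs /\ is_repr S cons h1 Fs o1 (RF Fs) rho1 delta1) ->
  (dHaus d P1 P2 <= kappa d P1 + kappa d P2 + (2 * omega)%:E
                    + drepr S R1 R2 + delta1%:E + delta2%:E + Delta%:E)%E.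
Proof.
move=> P1 P2 d hchain hLip hPR hom [Fs [P2Fs hFs]].
have P1K1 : P1 K1 by exists pi1.
have U1 : (P1 `|` P2) K1 by left.
have U2 : (P1 `|` P2) Fs by right.
case: hR2 => _ [oR2 _] _ _ hR2k.
case: hFs => _ [oF _] _ _ hFk.
pose a2f j := proj1_sig (cid (hR2k j)).
have hab2 j := proj2_sig (cid (hR2k j)).
pose b2f j := proj1_sig (cid (hab2 j)).
have hb2 j := proj2_sig (cid (hab2 j)).
pose aFf k := proj1_sig (cid (hFk k)).
have habF k := proj2_sig (cid (hFk k)).
pose bFf k := proj1_sig (cid (habF k)).
have hbF k := proj2_sig (cid (habF k)).
have hdr := drepr_bound S h1 h2 _ _ R1 (RF Fs) _ _ R2 delta1 delta2 Delta oR2 _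
  (let: And4 x _ _ _ := hb2 oR2 in x) (let: And4 _ _ x _ := hb2 oR2 in x)
  b2f (fun j => let: And4 _ x _ _ := hb2 j in x) (fun j => let: And4 _ _ _ x := hb2 j in x)
  oF _ (let: And4 x _ _ _ := hbF oF in x) (let: And4 _ _ x _ := hbF oF in x)
  bFf (fun k => let: And4 _ x _ _ := hbF k in x) (fun k => let: And4 _ _ _ x := hbF k in x)
  hclose.
have hX := hPR K1 Fs U1 U2.
rewrite hRF1 in hX.
have hKF : ((d K1 Fs)%:E <= (2 * omega)%:E + drepr S R1 R2 + delta1%:E + delta2%:E + Delta%:E)%E.
  have o1' := hom K1 U1; have o2' := hom Fs U2.
  rewrite hRF1 in o1'.
  rewrite distrC in o2'.
  have t1 := ler_distD (Psi (Hcat R1)) (Phi (csol K1)) (Phi (csol Fs)).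
  have t2 := ler_distD (Psi (Hcat (RF Fs))) (Psi (Hcat R1)) (Phi (csol Fs)).
  have dr0 := drepr_ge0 S R1 R2.
  move: hdr dr0; case: (drepr S R1 R2) => [r| |] hdr dr0 //.
    have := le_trans hX hdr; rewrite -EFinD lee_fin => hr.
    rewrite -!EFinD lee_fin /d; lra.
  by rewrite /= leey.
have kap1 F F' : P1 F -> P1 F' -> ((d F F')%:E <= kappa d P1)%E.
  by move=> hF hF'; apply: ereal_sup_ubound; exists F => //; exists F'.
have kap2 F F' : P2 F -> P2 F' -> ((d F F')%:E <= kappa d P2)%E.
  by move=> hF hF'; apply: ereal_sup_ubound; exists F => //; exists F'.
have main F F' : P1 F -> P2 F' -> ((d F F')%:E <= kappa d P1 + kappa d P2 + (2 * omega)%:E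
                    + drepr S R1 R2 + delta1%:E + delta2%:E + Delta%:E)%E.
  move=> hF hF'.
  have t1 : d F F' <= d F K1 + d K1 Fs + d Fs F'.
    rewrite /d; apply: le_trans (ler_distD (Phi (csol Fs)) _ _) _.
    by rewrite lerD2r; apply: ler_distD.
  apply: le_trans (_ : ((d F K1 + d K1 Fs + d Fs F')%:E <= _)%E); first by rewrite lee_fin.
  rewrite !EFinD.
  have := leeD (leeD (kap1 _ _ hF P1K1) hKF) (kap2 _ _ P2Fs hF').
  move=> H; apply: le_trans H _; rewrite le_eqVlt; apply/orP; left; apply/eqP.
  by rewrite addeAC !addeA.
rewrite /dHaus ge_max; apply/andP; split.
  apply: ge_ereal_sup => _ [F hF <-].
  apply: le_trans (main F Fs hF P2Fs).
  by apply: ereal_inf_lbound; exists Fs.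
apply: ge_ereal_sup => _ [F' hF' <-].
apply: le_trans (main K1 F' P1K1 hF').
by apply: ereal_inf_lbound; exists K1.
Qed.
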